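(* If $n\ge 1$ and $k\ge 2$ are integers, then the $k$-Pell graph $\Pi_{n,k}$ is a median graph.
   Context: For an integer $k\ge 2$, a $k$-Pell string is a finite word over the alphabet $\{0,1,\ldots,k-1,kk\}$, i.e. a word over $\{0,1,\ldots,k\}$ in which every maximal run of the letter $k$ has even length. For $n\ge 0$, the $k$-Pell graph $\Pi_{n,k}$ has as vertices all $k$-Pell strings of length $n$, and two vertices are adjacent if one is obtained from the other either by replacing a single letter $i$ by $i+1$ (or vice versa) for some $i\in\{0,1,\ldots,k-2\}$, or by replacing one factor $(k-1)(k-1)$ by $kk$ (or vice versa), in such a way that the resulting string is again a $k$-Pell string. A connected graph $G$ is a median graph if every triple $x,y,z$ of vertices has a unique median, i.e. a unique vertex lying simultaneously on a shortest $x,y$-path, a shortest $x,z$-path and a shortest $y,z$-path. *)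

(* Defs.v *)
From mathcomp Require Import all_boot.
Set Implicit Arguments. Unset Strict Implicit. Unset Printing Implicit Defensive.

(* k-Pell strings: words over {0,...,k} that parse as words over the
   alphabet {0,1,...,k-1,kk}; i.e. every letter is <= k and every maximal
   run of the letter k has even length. *)
Fixpoint pell_word (k : nat) (s : seq nat) : bool :=
  match s with
  | [::] => true
  | a :: t =>
      if a == k then
        match t with
        | b :: t' => (b == k) && pell_word k t'
        | [::] => false
        end
      else (a < k) && pell_word k t
  end.

Definition pell_vertex (n k : nat) (s : seq nat) : Prop :=
  size s = n /\ pell_word k s.

Definition pell_step1 (k : nat) (u v : seq nat) : Prop :=
  exists p j, p < size u /\ j.+1 < k /\ nth 0 u p = j /\ v = set_nth 0 u p j.+1.

Definition pell_step2 (k : nat) (u v : seq nat) : Prop :=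
  exists p, p.+1 < size u /\ nth 0 u p = k.-1 /\ nth 0 u p.+1 = k.-1 /\
            v = set_nth 0 (set_nth 0 u p k) p.+1 k.

Definition pell_adj (n k : nat) (u v : seq nat) : Prop :=
  pell_vertex n k u /\ pell_vertex n k v /\
  (pell_step1 k u v \/ pell_step1 k v u \/ pell_step2 k u v \/ pell_step2 k v u).

Section Graphs.
Variables (V : eqType) (vert : V -> Prop) (adj : V -> V -> Prop).

(* walk x p : x :: p is a walk (consecutive vertices adjacent); its end is
   last x p and its length is size p. *)
Fixpoint walk (x : V) (p : seq V) : Prop :=
  match p with
  | [::] => vert x
  | y :: p' => adj x y /\ walk y p'
  end.

Definition connected_graph : Prop :=
  forall x y, vert x -> vert y -> exists p, walk x p /\ last x p = y.

Definition on_shortest_path (x y w : V) : Prop :=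
  exists p, walk x p /\ last x p = y /\ w \in x :: p /\
    forall q, walk x q -> last x q = y -> size p <= size q.

Definition is_median (x y z m : V) : Prop :=
  vert m /\ on_shortest_path x y m /\ on_shortest_path x z m /\
  on_shortest_path y z m.

Definition median_graph : Prop :=
  connected_graph /\
  forall x y z, vert x -> vert y -> vert z ->
    exists m, is_median x y z m /\ forall m', is_median x y z m' -> m' = m.
End Graphs.

Definition pell_graph_median (n k : nat) : Prop :=
  median_graph (pell_vertex n k) (pell_adj n k).

(* Main.v *)
Require Import Defs.
From mathcomp Require Import all_boot zify.
Set Implicit Arguments. Unset Strict Implicit.

Definition dn (a b : nat) := (a - b) + (b - a).
Definition cd (p q : nat * bool) : nat := dn p.1 q.1 + (p.2 != q.2).
Fixpoint l1 (X Y : seq (nat * bool)) : nat :=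
  match X, Y with p :: X', q :: Y' => cd p q + l1 X' Y' | _, _ => 0 end.
Definition med (a b c : nat) := maxn (minn a b) (minn (maxn a b) c).
Definition maj (a b c : bool) := [|| a && b, b && c | a && c].
Fixpoint med3l (X Y Z : seq (nat * bool)) : seq (nat * bool) :=
  match X, Y, Z with x :: X', y :: Y', z :: Z' =>
    (med x.1 y.1 z.1, maj x.2 y.2 z.2) :: med3l X' Y' Z' | _, _, _ => [::] end.

Lemma nat_bet a m b : dn a m + dn m b = dn a b -> (a <= m <= b) \/ (b <= m <= a).
Proof. rewrite /dn; lia. Qed.
Lemma bet_nat a m b : (a <= m <= b) \/ (b <= m <= a) -> dn a m + dn m b = dn a b.
Proof. rewrite /dn; lia. Qed.
Lemma med_bet a b c : let m := med a b c in
 ((a <= m <= b) \/ (b <= m <= a)) /\ ((a <= m <= c) \/ (c <= m <= a)) /\ ((b <= m <= c) \/ (c <= m <= b)).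
Proof. rewrite /med; lia. Qed.
Lemma dn_tri a b c : dn a c <= dn a b + dn b c.
Proof. rewrite /dn; lia. Qed.
Lemma dn_sym a b : dn a b = dn b a.
Proof. rewrite /dn; lia. Qed.
Lemma dn0 a : dn a a = 0.
Proof. rewrite /dn; lia. Qed.
Lemma nat_uniq a b c m m' : (a <= m <= b) \/ (b <= m <= a) -> (a <= m <= c) \/ (c <= m <= a) ->
 (b <= m <= c) \/ (c <= m <= b) -> (a <= m' <= b) \/ (b <= m' <= a) -> (a <= m' <= c) \/ (c <= m' <= a) ->
 (b <= m' <= c) \/ (c <= m' <= b) -> m = m'.
Proof. lia. Qed.

Lemma cd_tri x y z : cd x z <= cd x y + cd y z.
Proof.
case: x y z => [a b] [c d] [e f]; rewrite /cd /=; have := dn_tri a c e.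
case: b; case: d; case: f => /=; lia.
Qed.
Lemma cd_sym x y : cd x y = cd y x.
Proof. case: x y => [a b] [c d]; rewrite /cd /= dn_sym; case: b; case: d => //. Qed.
Lemma cd0 x : cd x x = 0.
Proof. case: x => [a b]; by rewrite /cd /= eqxx dn0. Qed.
Lemma cd_med x y z : let m := (med x.1 y.1 z.1, maj x.2 y.2 z.2) in
  cd x m + cd m y = cd x y /\ cd x m + cd m z = cd x z /\ cd y m + cd m z = cd y z.
Proof.
case: x y z => [a b] [c d] [e f]; rewrite /cd /=.
have [/bet_nat h1 [/bet_nat h2 /bet_nat h3]] := med_bet a c e.
rewrite /maj; case: b; case: d; case: f => /=; lia.
Qed.
Lemma cd_split x y z : cd x y + cd y z = cd x z ->
  dn x.1 y.1 + dn y.1 z.1 = dn x.1 z.1 /\ (x.2 != y.2) + (y.2 != z.2) = (x.2 != z.2) :> nat.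
Proof.
case: x y z => [a b] [c d] [e f]; rewrite /cd /=; have := dn_tri a c e.
case: b; case: d; case: f => /=; lia.
Qed.
Lemma cd_uniq x y z m m' :
  cd x m + cd m y = cd x y -> cd x m + cd m z = cd x z -> cd y m + cd m z = cd y z ->
  cd x m' + cd m' y = cd x y -> cd x m' + cd m' z = cd x z -> cd y m' + cd m' z = cd y z ->
  m = m'.
Proof.
move=> /cd_split[/nat_bet a1 b1] /cd_split[/nat_bet a2 b2] /cd_split[/nat_bet a3 b3].
move=> /cd_split[/nat_bet a4 b4] /cd_split[/nat_bet a5 b5] /cd_split[/nat_bet a6 b6].
move: a1 a2 a3 a4 a5 a6 b1 b2 b3 b4 b5 b6.
case: m m' => [g h] [i j] /= a1 a2 a3 a4 a5 a6.
rewrite (nat_uniq a1 a2 a3 a4 a5 a6).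
by case: x.2 y.2 z.2 h j => [] [] [] [] [].
Qed.

Lemma l10 X : l1 X X = 0.
Proof. by elim: X => //= x X ->; rewrite cd0. Qed.
Lemma l1_sym X Y : l1 X Y = l1 Y X.
Proof. by elim: X Y => [|x X IH] [|y Y] //=; rewrite cd_sym IH. Qed.
Lemma l1_tri X Y Z : size X = size Y -> size Y = size Z -> l1 X Z <= l1 X Y + l1 Y Z.
Proof.
elim: X Y Z => [|x X IH] [|y Y] [|z Z] //= [e1] [e2].
have := IH _ _ e1 e2; have := cd_tri x y z; lia.
Qed.
Lemma l1_cat X1 X2 Y1 Y2 : size X1 = size Y1 -> l1 (X1 ++ X2) (Y1 ++ Y2) = l1 X1 Y1 + l1 X2 Y2.
Proof. elim: X1 Y1 => [|x X IH] [|y Y] //= [e]; rewrite IH //; lia. Qed.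
Lemma size_med3l X Y Z : size X = size Y -> size Y = size Z -> size (med3l X Y Z) = size X.
Proof. elim: X Y Z => [|x X IH] [|y Y] [|z Z] //= [e1] [e2]; by rewrite IH. Qed.
Lemma l1_med X Y Z : size X = size Y -> size Y = size Z -> let M := med3l X Y Z in
  l1 X M + l1 M Y = l1 X Y /\ l1 X M + l1 M Z = l1 X Z /\ l1 Y M + l1 M Z = l1 Y Z.
Proof.
elim: X Y Z => [|x X IH] [|y Y] [|z Z] //= [e1] [e2].
have := IH _ _ e1 e2; have := cd_med x y z => /=; lia.
Qed.
Lemma l1_uniq X Y Z M M' : size X = size Y -> size Y = size Z -> size Z = size M -> size M = size M' ->
  l1 X M + l1 M Y = l1 X Y -> l1 X M + l1 M Z = l1 X Z -> l1 Y M + l1 M Z = l1 Y Z ->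
  l1 X M' + l1 M' Y = l1 X Y -> l1 X M' + l1 M' Z = l1 X Z -> l1 Y M' + l1 M' Z = l1 Y Z ->
  M = M'.
Proof.
elim: X Y Z M M' => [|x X IH] [|y Y] [|z Z] [|m M] [|m' M'] //= [e1] [e2] [e3] [e4].
have t1 := cd_tri x m y; have t2 := cd_tri x m z; have t3 := cd_tri y m z.
have t1' := cd_tri x m' y; have t2' := cd_tri x m' z; have t3' := cd_tri y m' z.
have s1 : l1 X Y <= l1 X M + l1 M Y by apply: l1_tri; lia.
have s2 : l1 X Z <= l1 X M + l1 M Z by apply: l1_tri; lia.
have s3 : l1 Y Z <= l1 Y M + l1 M Z by apply: l1_tri; lia.
have s1' : l1 X Y <= l1 X M' + l1 M' Y by apply: l1_tri; lia.
have s2' : l1 X Z <= l1 X M' + l1 M' Z by apply: l1_tri; lia.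
have s3' : l1 Y Z <= l1 Y M' + l1 M' Z by apply: l1_tri; lia.
move=> *; f_equal.
  apply: (@cd_uniq x y z); lia.
apply: (IH Y Z) => //; lia.
Qed.
Section Pell.
Variable k : nat.
Hypothesis k2 : 2 <= k.
Notation pw := (pell_word k).

Lemma km_neq : (k.-1 == k) = false.
Proof. apply/eqP; lia. Qed.
Lemma km_lt : k.-1 < k.
Proof. lia. Qed.

Lemma pw_cons_lt a t : a < k -> pw (a::t) = pw t.
Proof. move=> ak /=. by rewrite ltn_eqF // ak. Qed.
Lemma pw_kk t : pw [:: k, k & t] = pw t.
Proof. by rewrite /= !eqxx. Qed.

Lemma pw_inv a t : pw (a::t) -> (a < k /\ pw t) \/ (a = k /\ exists t', t = k :: t' /\ pw t').
Proof.
rewrite /=; case: eqP => [->|_].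
  case: t => [|b t'] //= /andP[/eqP -> H]; right; split; eauto.
by move/andP=>[]; left.
Qed.

Lemma pell_ind (P : seq nat -> Prop) : P [::] ->
  (forall a t, a < k -> pw t -> P t -> P (a::t)) ->
  (forall t, pw t -> P t -> P [:: k, k & t]) -> forall s, pw s -> P s.
Proof.
move=> H0 H1 H2 s. have [m] := ubnP (size s).
elim: m s => // m IH [|a t] //= Hs Hp.
case/pw_inv: Hp => [[ak pt]|[-> [t' [Et pt']]]].
  by apply: H1 => //; apply: IH.
subst t; apply: H2 => //; apply: IH => //=; move: Hs => /=; lia.
Qed.

Fixpoint code (s : seq nat) : seq (nat * bool) :=
  match s with
  | [::] => [::]
  | a :: t => if a == k then
               match t with [::] => [:: (k.-1, true)]
               | _ :: t' => (k.-1, true) :: (k.-1, false) :: code t' end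
             else (a, false) :: code t
  end.

Lemma code_lt a t : a < k -> code (a::t) = (a,false) :: code t.
Proof. by move=> ak /=; rewrite ltn_eqF. Qed.
Lemma code_kk t : code [:: k, k & t] = [:: (k.-1,true), (k.-1,false) & code t].
Proof. by rewrite /= eqxx. Qed.

Lemma size_code s : size (code s) = size s.
Proof.
have [m] := ubnP (size s); elim: m s => // m IH [|a t] //= Hs.
case: eqP => _; last by rewrite /= IH.
case: t Hs => [|b t'] //= Hs; rewrite IH //; lia.
Qed.

Lemma code_cat x y : pw x -> code (x ++ y) = code x ++ code y.
Proof.
move: x; apply: pell_ind => //.
  by move=> a t ak _ IH; rewrite cat_cons !code_lt // IH.
by move=> t _ IH; rewrite cat_cons cat_cons !code_kk IH.
Qed.

Lemma code_inj u : pw u -> forall v, pw v -> code u = code v -> u = v.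
Proof.
move: u; apply: pell_ind => [|a t ak pt IH|t pt IH] v pv.
- by move=> E; have := congr1 size E; rewrite !size_code; case: v {pv E}.
- case: v pv => [|b v'] pv; first by rewrite code_lt.
  case/pw_inv: pv => [[bk pv']|[-> [v'' [-> pv'']]]].
    by rewrite !code_lt // => -[-> E]; rewrite (IH v' pv' E).
  by rewrite code_lt // code_kk.
- case: v pv => [|b v'] pv; first by rewrite code_kk.
  case/pw_inv: pv => [[bk pv']|[-> [v'' [-> pv'']]]].
    by rewrite code_kk code_lt.
  by rewrite !code_kk => -[E]; rewrite (IH v'' pv'' E).
Qed.

Fixpoint inS (c : seq (nat * bool)) : bool :=
  match c with
  | [::] => true
  | (x, false) :: r => (x < k) && inS r
  | (x, true) :: r => match r with
                      | (y, false) :: r' => [&& x == k.-1, y == k.-1 & inS r']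
                      | _ => false end
  end.

Lemma inS_cons x b r : inS ((x,b)::r) =
  [&& x < k, inS r & b ==> ((x == k.-1) && (head (0,true) r == (k.-1,false)))].
Proof.
case: b => /=; last by rewrite andbT.
case: r => [|[y c] r'] /=; rewrite xpair_eqE /= ?andbF //.
case: c; rewrite /= ?andbF //.
case: (x =P k.-1) => [->|]; case: (y =P k.-1) => [->|]; rewrite ?km_lt ?andbT ?andbF //=.
Qed.

Lemma inS_code s : pw s -> inS (code s).
Proof.
move: s; apply: pell_ind => [//|a t ak _ IH|t _ IH]; first by rewrite code_lt //= ak.
by rewrite code_kk /= !eqxx.
Qed.

Lemma inS_surj c : inS c -> exists s, pw s /\ code s = c.
Proof.
have [m] := ubnP (size c); elim: m c => // m IH [|[x b] r] //= Hs.
  by exists [::].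
case: b.
  case: r Hs => [|[y []] r'] //= Hs /and3P[/eqP -> /eqP -> H].
  have [s [ps cs]] := IH r' ltac:(lia) H.
  by exists [:: k, k & s]; rewrite pw_kk code_kk cs.
move=> /andP[xk H]; have [s [ps cs]] := IH r ltac:(lia) H.
by exists (x :: s); rewrite pw_cons_lt // code_lt // cs.
Qed.

Lemma inS_med X Y Z : size X = size Y -> size Y = size Z ->
  inS X -> inS Y -> inS Z -> inS (med3l X Y Z).
Proof.
elim: X Y Z => [|[x bx] X IH] [|[y by'] Y] [|[z bz] Z] // E1 E2.
move: E1 E2 => [e1] [e2] hx hy hz.
change (inS ((med x y z, maj bx by' bz) :: med3l X Y Z)); move: hx hy hz.
rewrite !inS_cons => /and3P[xk iX hX] /and3P[yk iY hY] /and3P[zk iZ hZ].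
apply/and3P; split.
- rewrite /med; lia.
- exact: IH.
apply/implyP => hm.
move: hX hY hZ hm; case: X Y Z e1 e2 {IH iX iY iZ} => [|[x2 c1] X2] [|[y2 c2] Y2] [|[z2 c3] Z2] //= _ _;
  rewrite ?xpair_eqE /maj /=; case: bx; case: by'; case: bz => //=; rewrite ?andbF //=;
  intros; repeat match goal with H : is_true (_ && _) |- _ => case/andP: H => ? ?
   | H : is_true (_ == _) |- _ => move/eqP: H => H end; subst;
  rewrite ?andbT /=; try (apply/andP; split); apply/eqP; rewrite /med; lia.
Qed.


Definition D u v := l1 (code u) (code v).

Lemma set_nth_cat0 x y i b : set_nth 0 (x ++ y) (size x + i) b = x ++ set_nth 0 y i b.
Proof. by elim: x => //= a x ->. Qed.

Lemma pw_split u : pw u -> forall p, p < size u -> nth 0 u p != k ->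
  exists x y, u = x ++ nth 0 u p :: y /\ size x = p /\ pw x /\ pw y.
Proof.
move: u; apply: pell_ind => [|a t ak pt IH|t pt IH] [|p] //=.
- by move=> _ _; exists [::], t.
- move=> hp hn; have [x [y [E [sx [px py]]]]] := IH p hp hn.
  by exists (a :: x), y; rewrite pw_cons_lt // cat_cons -E /= sx.
- by rewrite eqxx.
- case: p => [|p]; first by rewrite eqxx.
  move=> /= hp hn; have [x [y [E [sx [px py]]]]] := IH p hp hn.
  by exists [:: k, k & x], y; rewrite pw_kk !cat_cons -E /= sx.
Qed.

Lemma step1_D u v : pw u -> pell_step1 k u v -> D u v = 1.
Proof.
move=> pu [p [j [hp [hj [hn ->]]]]].
have jk : j < k by lia.
have hk : nth 0 u p != k by rewrite hn ltn_eqF.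
have [x [y [E [sx [px py]]]]] := pw_split pu hp hk.
rewrite hn in E; rewrite E -sx -[size x]addn0 set_nth_cat0 /D !code_cat // !code_lt //.
rewrite l1_cat // l10 /= l10 /cd /dn /=; lia.
Qed.

Lemma step2_D u v : pw u -> pell_step2 k u v -> D u v = 1.
Proof.
move=> pu [p [hp [hn1 [hn2 ->]]]].
have hk : nth 0 u p != k by rewrite hn1 km_neq.
have [x [y [E [sx [px py]]]]] := pw_split pu (ltnW hp) hk.
rewrite hn1 in E; move: hn2; rewrite E nth_cat -sx ltnNge leqnSn subSnn.
case: y E py => [|c y'] E py /= hc.
  by move: hp; rewrite E size_cat /= -sx; lia.
subst c; move: py; rewrite pw_cons_lt ?km_lt // => py.
have e0 : forall z b, set_nth 0 (x ++ z) (size x) b = x ++ set_nth 0 z 0 b.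
  by move=> z b; rewrite -[in LHS](addn0 (size x)) set_nth_cat0.
have e1 : forall z b, set_nth 0 (x ++ z) (size x).+1 b = x ++ set_nth 0 z 1 b.
  by move=> z b; rewrite -[in LHS](addn1 (size x)) set_nth_cat0.
rewrite e0 e1 /=.
rewrite /D !code_cat // code_kk !code_lt ?km_lt // l1_cat // l10 /= l10 /cd /dn /=; lia.
Qed.

Lemma adj_D n u v : pell_adj n k u v -> D u v = 1.
Proof.
case=> [[_ pu] [[_ pv] [h|[h|[h|h]]]]].
- exact: step1_D h.
- by rewrite /D l1_sym; apply: step1_D h.
- exact: step2_D h.
- by rewrite /D l1_sym; apply: step2_D h.
Qed.


Lemma step1_cons a u w : pell_step1 k u w -> pell_step1 k (a::u) (a::w).
Proof. by case=> p [j [h1 [h2 [h3 ->]]]]; exists p.+1, j. Qed.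
Lemma step2_cons a u w : pell_step2 k u w -> pell_step2 k (a::u) (a::w).
Proof. by case=> p [h1 [h2 [h3 ->]]]; exists p.+1. Qed.
Lemma adj_cons1 n a u w : pw (a::u) -> pw (a::w) -> pell_adj n k u w -> pell_adj n.+1 k (a::u) (a::w).
Proof.
move=> pu pw' [[su _] [[sw _] h]]; split; first by split; rewrite /= ?su.
split; first by split; rewrite /= ?sw.
case: h => [h|[h|[h|h]]]; [left|right;left|right;right;left|right;right;right];
 by [apply: step1_cons|apply: step2_cons].
Qed.

Lemma adj_kk n u w : pell_adj n k u w -> pell_adj n.+2 k [:: k, k & u] [:: k, k & w].
Proof.
move=> [[su pu] [[sw pw'] h]]; split; first by split; rewrite ?pw_kk /= ?su.
split; first by split; rewrite ?pw_kk /= ?sw.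
case: h => [h|[h|[h|h]]]; [left|right;left|right;right;left|right;right;right];
 by [do 2 apply: step1_cons|do 2 apply: step2_cons].
Qed.

Lemma step_toward u : pw u -> forall n v, size u = n -> pell_vertex n k v -> u <> v ->
  exists w, pell_adj n k u w /\ (D w v).+1 = D u v.
Proof.
move: u; apply: pell_ind => [|a t ak pt IH|t pt IH] n v su [sv pv] neq.
- by case: v sv pv neq => //= b v' sv; rewrite -su in sv.
- case: v sv pv neq => [|b v'] sv pv neq; first by rewrite -su in sv.
  have vu : pell_vertex n k (a :: t) by split; rewrite ?pw_cons_lt.
  case/pw_inv: pv => [[bk pv']|[Eb [v'' [Ev pv'']]]].
  + case: (ltngtP a b) => hab.
    * have a1k : a.+1 < k by lia.
      exists (a.+1 :: t); split; last by rewrite /D !code_lt //= /cd /dn /=; lia.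
      split=> //; split; first by split; rewrite ?pw_cons_lt.
      by left; exists 0, a.
    * have a1k : a.-1 < k by lia.
      exists (a.-1 :: t); split; last by rewrite /D !code_lt //= /cd /dn /=; lia.
      split=> //; split; first by split; rewrite ?pw_cons_lt.
      right; left; exists 0, a.-1; rewrite prednK //=; lia.
    * subst b; have neq' : t <> v' by move=> E; apply: neq; rewrite E.
      have vv : pell_vertex (size t) k v' by split => //; move: sv; rewrite -su /= => -[].
      have [w' [aw dw]] := IH (size t) v' erefl vv neq'.
      have [_ [[_ pw'] _]] := aw.
      exists (a :: w'); split; last by rewrite /D !code_lt //= cd0.
      rewrite -su; apply: adj_cons1 => //; rewrite pw_cons_lt //.
  + subst b v'.
    case: (ltnP a k.-1) => hak.
    * have a1k : a.+1 < k by lia.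
      exists (a.+1 :: t); split; last by rewrite /D code_kk !code_lt // /= /cd /dn /=; lia.
      split=> //; split; first by split; rewrite ?pw_cons_lt.
      by left; exists 0, a.
    have ea : a = k.-1 by lia.
    subst a.
    case: t pt su neq IH vu => [|c t'] pt su neq IH vu; first by rewrite -su in sv.
    case/pw_inv: (pt) => [[ck pt']|[Ec [t'' [Et pt'']]]].
    * case: (ltnP c k.-1) => hck.
      - have c1k : c.+1 < k by lia.
        exists [:: k.-1, c.+1 & t']; split; last by rewrite /D code_kk !code_lt // /= /cd /dn /=; lia.
        split=> //; split; first by split; rewrite ?pw_cons_lt.
        by left; exists 1, c.
      - have ec : c = k.-1 by lia.
        subst c.
        exists [:: k, k & t']; split; last by rewrite /D !code_kk !code_lt ?km_lt //= /cd /dn /=; lia.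
        split=> //; split; first by split; rewrite ?pw_kk.
        by right; right; left; exists 0.
    * subst c t'.
      exists [:: k.-1, k.-1, k.-1 & t'']; split; last first.
        by rewrite /D [code [:: k.-1, k, k & _]]code_lt ?km_lt // !code_kk !code_lt ?km_lt //= /cd /dn /=; lia.
      split=> //; split; first by split; rewrite ?pw_cons_lt ?km_lt.
      by right; right; right; exists 1.
- case: v sv pv neq => [|b v'] sv pv neq; first by rewrite -su in sv.
  have vu : pell_vertex n k [:: k, k & t] by split; rewrite ?pw_kk.
  case/pw_inv: pv => [[bk pv']|[Eb [v'' [Ev pv'']]]].
  + exists [:: k.-1, k.-1 & t]; split; last first.
      by rewrite /D code_kk !code_lt ?km_lt //= /cd /dn /=; lia.
    split=> //; split; first by split; rewrite ?pw_cons_lt ?km_lt.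
    by right; right; right; exists 0.
  + subst b v'; have neq' : t <> v'' by move=> E; apply: neq; rewrite E.
    have vv : pell_vertex (size t) k v'' by split => //; move: sv; rewrite -su /= => -[].
    have [w' [aw dw]] := IH (size t) v'' erefl vv neq'.
    have [_ [[_ pw'] _]] := aw.
    exists [:: k, k & w']; split; last by rewrite /D !code_kk /= !cd0.
    rewrite -su; exact: adj_kk.
Qed.


Notation W n := (walk (pell_vertex n k) (pell_adj n k)).

Lemma walk_vx n x p : W n x p -> pell_vertex n k x.
Proof. by case: p => [|y p] //= [[vx _] _]. Qed.

Lemma walk_lastv n x p : W n x p -> pell_vertex n k (last x p).
Proof. elim: p x => [|y p IH] x //= [_ h]; exact: IH. Qed.

Lemma walk_cat n x p q : W n x p -> W n (last x p) q -> W n x (p ++ q).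
Proof. elim: p x => [|y p IH] x //= [a h] h'; split => //; exact: IH. Qed.

Lemma walk_split n x p w : W n x p -> w \in x :: p ->
  exists p1 p2, p = p1 ++ p2 /\ W n x p1 /\ last x p1 = w /\ W n w p2.
Proof.
elim: p x => [|y p IH] x /=.
  by move=> vx; rewrite inE => /eqP ->; exists [::], [::].
move=> [a h]; rewrite in_cons => /orP[/eqP ->|hw].
  by exists [::], (y :: p); split => //; split; [case: a | split].
have [p1 [p2 [E [h1 [h2 h3]]]]] := IH y h hw.
by exists (y :: p1), p2; rewrite E.
Qed.

Lemma D_tri n x y z : pell_vertex n k x -> pell_vertex n k y -> pell_vertex n k z ->
  D x z <= D x y + D y z.
Proof. move=> [sx _] [sy _] [sz _]; apply: l1_tri; rewrite !size_code; congruence. Qed.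

Lemma walk_D n x p : W n x p -> D x (last x p) <= size p.
Proof.
elim: p x => [|y p IH] x /=; first by rewrite /D l10.
move=> [a h]; have := IH y h; have := adj_D a.
have [vx [vy _]] := a; have := D_tri vx vy (walk_lastv h).
move=> t1 t2 t3; apply: (leq_trans t1); rewrite t2 add1n ltnS; exact: t3.
Qed.

Lemma exists_walk n u v : pell_vertex n k u -> pell_vertex n k v ->
  exists p, W n u p /\ last u p = v /\ size p = D u v.
Proof.
move=> vu vv; move: {2}(D u v) (erefl (D u v)) => d.
elim: d u vu => [|d IH] u vu Hd.
- case: (eqVneq u v) => [E|neq]; first by subst; exists [::].
  have neq' : u <> v by apply/eqP.
  case: vu => su pu.
  have [w [aw dw]] := step_toward pu su vv neq'; by rewrite Hd in dw.
- case: (eqVneq u v) => [E|neq]; first by subst; rewrite /D l10 in Hd.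
  have neq' : u <> v by apply/eqP.
  have [su pu] := vu.
  have [w [aw dw]] := step_toward pu su vv neq'.
  have [_ [vw _]] := aw.
  have [p [hp [lp sp]]] := IH w vw ltac:(lia).
  by exists (w :: p); rewrite /= sp.
Qed.

Lemma osp_of_D n x y w : pell_vertex n k x -> pell_vertex n k y -> pell_vertex n k w ->
  D x w + D w y = D x y -> on_shortest_path (pell_vertex n k) (pell_adj n k) x y w.
Proof.
move=> vx vy vw e.
have [p1 [h1 [l1' s1]]] := exists_walk vx vw.
have [p2 [h2 [l2 s2]]] := exists_walk vw vy.
exists (p1 ++ p2); split; first by apply: walk_cat => //; rewrite l1'.
split; first by rewrite last_cat l1'.
split; first by rewrite -cat_cons mem_cat -l1' mem_last.
move=> q hq lq; have := walk_D hq; rewrite lq size_cat; lia.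
Qed.

Lemma D_of_osp n x y w : on_shortest_path (pell_vertex n k) (pell_adj n k) x y w ->
  pell_vertex n k w /\ D x w + D w y = D x y.
Proof.
move=> [p [hp [lp [hw hmin]]]].
have vx := walk_vx hp.
have vy : pell_vertex n k y by rewrite -lp; exact: walk_lastv hp.
have [p1 [p2 [E [h1 [l1' h2]]]]] := walk_split hp hw.
have vw : pell_vertex n k w by rewrite -l1'; exact: walk_lastv h1.
split => //.
have [q [hq [lq sq]]] := exists_walk vx vy.
have := hmin q hq lq.
have := walk_D h1; rewrite l1' => d1.
have := walk_D h2; have -> : last w p2 = y by rewrite -lp E last_cat l1'.
have := D_tri vx vw vy; rewrite E size_cat; lia.
Qed.

End Pell.

Theorem proposition5p7 (n k : nat) : 1 <= n -> 2 <= k -> pell_graph_median n k.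
Proof.
move=> _ k2; split.
  move=> x y vx vy; have [p [h [l _]]] := exists_walk k2 vx vy; by exists p.
move=> x y z vx vy vz.
have sx : size (code k x) = n by rewrite size_code; case: vx.
have sy : size (code k y) = n by rewrite size_code; case: vy.
have sz : size (code k z) = n by rewrite size_code; case: vz.
have hin : inS k (med3l (code k x) (code k y) (code k z)).
  have ix : inS k (code k x) by apply: inS_code => //; case: vx.
  have iy : inS k (code k y) by apply: inS_code => //; case: vy.
  have iz : inS k (code k z) by apply: inS_code => //; case: vz.
  by apply: inS_med; rewrite ?sx ?sy ?sz.
have [m [pm cm]] := inS_surj k2 hin.
have vm : pell_vertex n k m.
  by split => //; move: (congr1 size cm); rewrite size_code // size_med3l ?sx ?sy ?sz.
have [b1 [b2 b3]] := @l1_med (code k x) (code k y) (code k z) ltac:(congruence) ltac:(congruence).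
exists m; split.
  split=> //; split; [|split]; apply: osp_of_D => //; rewrite /D cm //.
move=> m' [vm' [o1 [o2 o3]]].
have [_ e1] := D_of_osp k2 o1.
have [_ e2] := D_of_osp k2 o2.
have [_ e3] := D_of_osp k2 o3.
have pm' : pell_word k m' by case: vm'.
apply: (code_inj k2 pm' pm); rewrite cm.
have sm' : size (code k m') = n by rewrite size_code //; case: vm'.
apply: (@l1_uniq (code k x) (code k y) (code k z)); rewrite ?size_med3l ?sx ?sy ?sz ?sm' //.
Qed.
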